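(* Let $(\alpha,\beta)$ be an admissible, non-null pair and assume there is no $x\in(0,1)$ with $\pi_x(\alpha)=\pi_x(\beta)$. Then for every $a\in(1,2]$ there is a $p$ with $1-1/a\le p\le 1/a$ such that $f_{(a,p,+)}(\pi_{1/a}(\omega))=\pi_{1/a}(S\omega)$ for all $\omega\in\Omega_{(\alpha,\beta,+)}$ and $f_{(a,p,-)}(\pi_{1/a}(\omega))=\pi_{1/a}(S\omega)$ for all $\omega\in\Omega_{(\alpha,\beta,-)}$.
   Context: For $1<a\le2$, $1-\frac1a\le p\le\frac1a$: $f_{(a,p,-)}(x)=ax$ if $x\le p$, $ax+(1-a)$ if $x>p$; $f_{(a,p,+)}(x)=ax$ if $x<p$, $ax+(1-a)$ if $x\ge p$. $\Omega=\{0,1\}^\infty$ (infinite binary strings $\omega_0\omega_1\cdots$), $S$ the left shift, $\preceq$ the lexicographic order with intervals $[\alpha,\beta]=\{\omega:\alpha\preceq\omega\preceq\beta\}$ and half-open analogues. $(\alpha,\beta)$ is admissible if $\alpha_0=0,\alpha_1=1,\beta_0=1,\beta_1=0$ and $S^n\alpha\notin(\alpha,\beta]$, $S^n\beta\notin[\alpha,\beta)$ for all $n\ge0$. $\Omega_{(\alpha,\beta,-)}=\{\omega:S^n\omega\notin(\alpha,\beta]\ \forall n\ge0\}$, $\Omega_{(\alpha,\beta,+)}=\{\omega:S^n\omega\notin[\alpha,\beta)\ \forall n\ge0\}$, $\Omega_{(\alpha,\beta)}$ their union. With $\Gamma_n=\{\omega_0\cdots\omega_n:\omega\in\Gamma\}$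 and $h(\Gamma)=\limsup_n\frac1n\ln|\Gamma_n|$, the pair is non-null if $h(\Omega_{(\alpha,\beta)})>0$. Projection: $\pi_x(\omega)=(1-x)\sum_{k\ge0}\omega_kx^k$ for $x\in[0,1)$. *)

(* Defs.v *)
From Stdlib Require Import Reals Lra List ClassicalDescription.
From Coquelicot Require Import Coquelicot.
Open Scope R_scope.

Definition Omega := nat -> bool.

Definition S_shift (w : Omega) : Omega := fun n => w (S n).

Definition lex_lt (w v : Omega) : Prop :=
  exists n, (forall k, (k < n)%nat -> w k = v k) /\ w n = false /\ v n = true.
Definition lex_le (w v : Omega) : Prop := lex_lt w v \/ w = v.

Definition in_oc (a b w : Omega) : Prop := lex_lt a w /\ lex_le w b.
Definition in_co (a b w : Omega) : Prop := lex_le a w /\ lex_lt w b.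

Definition admissible (a b : Omega) : Prop :=
  a 0%nat = false /\ a 1%nat = true /\ b 0%nat = true /\ b 1%nat = false /\
  (forall n, ~ in_oc a b (Nat.iter n S_shift a)) /\
  (forall n, ~ in_co a b (Nat.iter n S_shift b)).

Definition Omega_minus (a b : Omega) (w : Omega) : Prop :=
  forall n, ~ in_oc a b (Nat.iter n S_shift w).
Definition Omega_plus (a b : Omega) (w : Omega) : Prop :=
  forall n, ~ in_co a b (Nat.iter n S_shift w).
Definition Omega_ab (a b : Omega) (w : Omega) : Prop :=
  Omega_minus a b w \/ Omega_plus a b w.

Fixpoint words (n : nat) : list (list bool) :=
  match n with
  | O => nil :: nil
  | S m => map (cons false) (words m) ++ map (cons true) (words m)
  end.

Definition prefix (w : Omega) (n : nat) : list bool := map w (seq 0 n).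

Definition n_prefixes (G : Omega -> Prop) (n : nat) : nat :=
  length (filter
    (fun u => if excluded_middle_informative (exists w, G w /\ prefix w (S n) = u)
              then true else false) (words (S n))).

Definition entropy (G : Omega -> Prop) : Rbar :=
  LimSup_seq (fun n => ln (INR (n_prefixes G n)) / INR n).

Definition non_null (a b : Omega) : Prop := Rbar_lt 0 (entropy (Omega_ab a b)).

Definition b2R (x : bool) : R := if x then 1 else 0.

Definition proj (x : R) (w : Omega) : R :=
  (1 - x) * Series (fun k => b2R (w k) * x ^ k).

Definition f_minus (a p x : R) : R :=
  if Rle_dec x p then a * x else a * x + (1 - a).
Definition f_plus (a p x : R) : R :=
  if Rlt_dec x p then a * x else a * x + (1 - a).

(* Main.v *)
Require Import Defs.
From Stdlib Require Import Reals Lra Lia FunctionalExtensionality.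
From Coquelicot Require Import Coquelicot.
Open Scope R_scope.

Lemma geom_ex y : 0 <= y < 1 -> ex_series (fun k => y ^ k).
Proof. intros. eexists. apply is_series_geom. rewrite Rabs_pos_eq; lra. Qed.

Lemma geom_S y : 0 <= y < 1 -> Series (fun k => y ^ k) = / (1 - y).
Proof. intros. apply is_series_unique, is_series_geom. rewrite Rabs_pos_eq; lra. Qed.

Lemma Ser0 : Series (fun _ => 0) = 0.
Proof.
  replace (fun _ : nat => 0) with (fun n : nat => 0 * (fun _ : nat => 0) n)
    by (apply functional_extensionality; intros; ring).
  rewrite Series_scal_l. ring.
Qed.

Lemma b2R_01 b : 0 <= b2R b <= 1.
Proof. destruct b; simpl; lra. Qed.

Lemma term_bd (w : Omega) y k : 0 <= y -> 0 <= b2R (w k) * y ^ k <= y ^ k.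
Proof. intros. pose proof (b2R_01 (w k)). pose proof (pow_le y k H). nra. Qed.

Lemma ser_ex (w : Omega) y : 0 <= y < 1 -> ex_series (fun k => b2R (w k) * y ^ k).
Proof.
  intros. apply (@ex_series_le R_AbsRing R_CompleteNormedModule _ (fun k => y ^ k)); [|now apply geom_ex].
  intros n. change norm with Rabs. simpl. pose proof (term_bd w y n ltac:(lra)).
  rewrite Rabs_pos_eq; lra.
Qed.

Lemma ser_bd (w : Omega) y : 0 <= y < 1 ->
  0 <= Series (fun k => b2R (w k) * y ^ k) <= / (1 - y).
Proof.
  intros. split.
  - rewrite <- Ser0.
    apply Series_le; [|now apply ser_ex]. intros; pose proof (term_bd w y n); lra.
  - rewrite <- geom_S by auto. apply Series_le; [|now apply geom_ex].
    intros; apply term_bd; lra.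
Qed.

Lemma proj_bd (w : Omega) y : 0 <= y < 1 -> 0 <= proj y w <= 1.
Proof.
  intros. unfold proj. pose proof (ser_bd w y H).
  assert ((1-y) * / (1-y) = 1) by (field; lra).
  split; [apply Rmult_le_pos; lra|]. apply Rle_trans with ((1-y) * /(1-y)); [apply Rmult_le_compat_l; lra | lra].
Qed.

Lemma proj_rec (w : Omega) y : 0 <= y < 1 ->
  proj y w = (1 - y) * b2R (w 0%nat) + y * proj y (S_shift w).
Proof.
  intros. unfold proj. rewrite Series_incr_1 by (now apply ser_ex).
  replace (fun k => b2R (w (S k)) * y ^ S k) with
    (fun k => y * (b2R (S_shift w k) * y ^ k)).
  2:{ apply functional_extensionality; intros; unfold S_shift; simpl; ring. }
  rewrite Series_scal_l. simpl. ring.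
Qed.

Lemma ser_diff (w : Omega) y z : 0 <= z <= y -> y < 1 ->
  0 <= Series (fun k => b2R (w k) * y ^ k) - Series (fun k => b2R (w k) * z ^ k)
    <= / (1 - y) - / (1 - z).
Proof.
  intros.
  rewrite <- Series_minus by (apply ser_ex; lra).
  rewrite <- (geom_S y), <- (geom_S z) by lra.
  rewrite <- Series_minus by (apply geom_ex; lra).
  split.
  - rewrite <- Ser0.
    apply Series_le; [|apply (ex_series_minus (fun k => b2R (w k) * y ^ k)); apply ser_ex; lra].
    intros n. pose proof (pow_incr z y n ltac:(lra)). pose proof (b2R_01 (w n)). nra.
  - apply Series_le; [|apply (ex_series_minus (fun k => y ^ k)); apply geom_ex; lra].
    intros n. pose proof (pow_incr z y n ltac:(lra)). pose proof (b2R_01 (w n)). nra.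
Qed.

Lemma lip_ord (w : Omega) y z c : 0 <= z <= y -> y <= c -> c < 1 ->
  Rabs (proj y w - proj z w) <= (y - z) / (1 - c).
Proof.
  intros. unfold proj.
  pose proof (ser_diff w y z H ltac:(lra)).
  pose proof (ser_bd w z ltac:(lra)).
  set (Sy := Series (fun k => b2R (w k) * y ^ k)) in *. set (Sz := Series (fun k => b2R (w k) * z ^ k)) in *.
  assert (E1 : (1 - y) * (/ (1 - y) - / (1 - z)) = (y - z) / (1 - z)) by (field; lra).
  assert (E2 : (y - z) * / (1 - z) = (y - z) / (1 - z)) by (field; lra).
  assert (E3 : (y - z) / (1 - z) <= (y - z) / (1 - c)).
  { unfold Rdiv. apply Rmult_le_compat_l; [lra|]. apply Rinv_le_contravar; lra. }
  assert (U : (1 - y) * (Sy - Sz) <= (y - z) / (1 - z)).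
  { rewrite <- E1. apply Rmult_le_compat_l; lra. }
  assert (U2 : 0 <= (1 - y) * (Sy - Sz)) by (apply Rmult_le_pos; lra).
  assert (V : (y - z) * Sz <= (y - z) / (1 - z)).
  { rewrite <- E2. apply Rmult_le_compat_l; lra. }
  assert (V2 : 0 <= (y - z) * Sz) by (apply Rmult_le_pos; lra).
  replace ((1 - y) * Sy - (1 - z) * Sz) with ((1 - y) * (Sy - Sz) - (y - z) * Sz) by ring.
  apply Rabs_le. lra.
Qed.

Lemma lip (w : Omega) y z c : 0 <= z <= c -> 0 <= y <= c -> c < 1 ->
  Rabs (proj y w - proj z w) <= Rabs (y - z) / (1 - c).
Proof.
  intros. destruct (Rle_dec z y).
  - rewrite (Rabs_pos_eq (y - z)) by lra. apply lip_ord; lra.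
  - rewrite Rabs_minus_sym, (Rabs_left (y - z)) by lra.
    replace (- (y - z)) with (z - y) by ring. apply lip_ord; lra.
Qed.

Lemma iter_app n (w : Omega) k : Nat.iter n S_shift w k = w (n + k)%nat.
Proof.
  revert w k; induction n; intros; simpl; auto.
  unfold S_shift at 1. rewrite IHn. f_equal; lia.
Qed.

Lemma Om_iter a b w n : Omega_minus a b w -> Omega_minus a b (Nat.iter n S_shift w).
Proof. intros H m. rewrite <- Nat.iter_add. apply H. Qed.
Lemma Op_iter a b w n : Omega_plus a b w -> Omega_plus a b (Nat.iter n S_shift w).
Proof. intros H m. rewrite <- Nat.iter_add. apply H. Qed.
Lemma Y_iter a b w n : Omega_ab a b w -> Omega_ab a b (Nat.iter n S_shift w).
Proof. intros [H|H]; [left; now apply Om_iter | right; now apply Op_iter]. Qed.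

Lemma proj_diff y n : 0 <= y < 1 -> forall (w v : Omega),
  (forall k, (k < n)%nat -> w k = v k) ->
  proj y w - proj y v = y ^ n * (proj y (Nat.iter n S_shift w) - proj y (Nat.iter n S_shift v)).
Proof.
  intros Hy. induction n; intros w v H.
  - simpl. ring.
  - rewrite (proj_rec w), (proj_rec v) by auto.
    rewrite (H 0%nat) by lia.
    rewrite !Nat.iter_succ_r.
    assert (E : proj y (S_shift w) - proj y (S_shift v) = y ^ n *
      (proj y (Nat.iter n S_shift (S_shift w)) - proj y (Nat.iter n S_shift (S_shift v)))).
    { apply IHn. intros k Hk. unfold S_shift. apply H. lia. }
    transitivity (y * (proj y (S_shift w) - proj y (S_shift v))); [ring|].
    rewrite E. simpl. ring.
Qed.

Lemma first_diff (w v : Omega) : w <> v ->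
  exists n, (forall k, (k < n)%nat -> w k = v k) /\ w n <> v n.
Proof.
  intros Hne.
  assert (exists N, w N <> v N) as [N HN].
  { apply Classical_Pred_Type.not_all_ex_not. intro Hall. apply Hne.
    apply functional_extensionality. auto. }
  revert HN. induction N as [N IH] using (well_founded_induction Wf_nat.lt_wf). intros HN.
  destruct (Classical_Prop.classic (forall k, (k < N)%nat -> w k = v k)) as [Hc|Hc].
  - exists N; auto.
  - apply Classical_Pred_Type.not_all_ex_not in Hc as [k Hk].
    apply IH with k.
    + destruct (Classical_Prop.classic (k < N)%nat); auto. exfalso; apply Hk; intros; lia.
    + intro E. apply Hk. intros; auto.
Qed.

Lemma lex_trich (w v : Omega) : w <> v -> lex_lt w v \/ lex_lt v w.
Proof.
  intros H. destruct (first_diff w v H) as [n [Hp Hn]].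
  destruct (w n) eqn:E1, (v n) eqn:E2; try congruence.
  - right. exists n. repeat split; auto. intros k Hk; symmetry; auto.
  - left. exists n. repeat split; auto.
Qed.

Lemma lex_lt_0 (w v : Omega) : w 0%nat = false -> v 0%nat = true -> lex_lt w v.
Proof. intros. exists 0%nat. repeat split; auto. intros; lia. Qed.


Lemma al0 (al be : Omega) (Had : admissible al be) : al 0%nat = false. Proof. apply Had. Qed.
Lemma be0 (al be : Omega) (Had : admissible al be) : be 0%nat = true. Proof. apply Had. Qed.
Lemma al_Y (al be : Omega) (Had : admissible al be) : Omega_ab al be al. Proof. left. intro n. apply Had. Qed.
Lemma be_Y (al be : Omega) (Had : admissible al be) : Omega_ab al be be. Proof. right. intro n. apply Had. Qed.
Lemma al_notp (al be : Omega) (Had : admissible al be) : ~ Omega_plus al be al.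
Proof. intro H. apply (H 0%nat). simpl. split; [now right|]. apply lex_lt_0; [apply (al0 al be Had)|apply (be0 al be Had)]. Qed.
Lemma be_notm (al be : Omega) (Had : admissible al be) : ~ Omega_minus al be be.
Proof. intro H. apply (H 0%nat). simpl. split; [|now right]. apply lex_lt_0; [apply (al0 al be Had)|apply (be0 al be Had)]. Qed.

Lemma zero_start (al be : Omega) (Had : admissible al be) u : Omega_ab al be u -> u 0%nat = false -> u = al \/ lex_lt u al.
Proof.
  intros HY H0. destruct (Classical_Prop.classic (u = al)) as [E|E]; [now left|right].
  destruct (lex_trich u al E) as [L|L]; auto. exfalso.
  assert (lex_lt u be) by (apply lex_lt_0; auto; apply (be0 al be Had)).
  destruct HY as [HY|HY]; apply (HY 0%nat); simpl; split.
  - exact L.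
  - now left.
  - now left.
  - auto.
Qed.

Lemma one_start (al be : Omega) (Had : admissible al be) v : Omega_ab al be v -> v 0%nat = true -> v = be \/ lex_lt be v.
Proof.
  intros HY H0. destruct (Classical_Prop.classic (v = be)) as [E|E]; [now left|right].
  destruct (lex_trich v be E) as [L|L]; auto. exfalso.
  assert (lex_lt al v) by (apply lex_lt_0; auto; apply (al0 al be Had)).
  destruct HY as [HY|HY]; apply (HY 0%nat); simpl; split.
  - auto.
  - now left.
  - now left.
  - auto.
Qed.

Definition Pp (al be : Omega) y := forall u v, Omega_ab al be u -> Omega_ab al be v ->
  u 0%nat = false -> v 0%nat = true -> proj y u <= proj y v.

Lemma R1 (al be : Omega) (Had : admissible al be) y u : 0 <= y < 1 -> Pp al be y -> Omega_ab al be u -> u 0%nat = false -> proj y u <= proj y al.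
Proof.
  intros Hy HP HY H0. destruct (zero_start al be Had u HY H0) as [E|[n [Hp [Hu Ha]]]].
  - subst; lra.
  - pose proof (proj_diff y n Hy u al Hp).
    assert (proj y (Nat.iter n S_shift u) <= proj y (Nat.iter n S_shift al)).
    { apply HP; try apply Y_iter; auto. apply (al_Y al be Had).
      rewrite iter_app, Nat.add_0_r; auto. rewrite iter_app, Nat.add_0_r; auto. }
    pose proof (pow_le y n ltac:(lra)). nra.
Qed.

Lemma R2 (al be : Omega) (Had : admissible al be) y v : 0 <= y < 1 -> Pp al be y -> Omega_ab al be v -> v 0%nat = true -> proj y be <= proj y v.
Proof.
  intros Hy HP HY H0. destruct (one_start al be Had v HY H0) as [E|[n [Hp [Hu Ha]]]].
  - subst; lra.
  - pose proof (proj_diff y n Hy be v Hp).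
    assert (proj y (Nat.iter n S_shift be) <= proj y (Nat.iter n S_shift v)).
    { apply HP; try apply Y_iter; auto. apply (be_Y al be Had).
      rewrite iter_app, Nat.add_0_r; auto. rewrite iter_app, Nat.add_0_r; auto. }
    pose proof (pow_le y n ltac:(lra)). nra.
Qed.


Lemma abs_le a b : Rabs a <= b -> - b <= a <= b.
Proof. intros. pose proof (Rle_abs a). pose proof (Rle_abs (-a)). rewrite Rabs_Ropp in H1. lra. Qed.

Lemma lipE (w : Omega) x y z e : 1/2 <= y <= x -> 1/2 <= z <= x -> x < 1 -> 0 < e ->
  Rabs (y - z) <= e * (1 - x) -> - e <= proj y w - proj z w <= e.
Proof.
  intros. apply abs_le. eapply Rle_trans. apply (lip w y z x); lra.
  apply Rmult_le_reg_r with (1 - x); [lra|]. unfold Rdiv. rewrite Rmult_assoc, Rinv_l; lra.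
Qed.

Lemma all_ones y : 0 < y < 1 -> forall k (w : Omega), proj y w = 1 -> w k = true.
Proof.
  intros Hy k. induction k; intros w H; rewrite proj_rec in H by lra;
  pose proof (proj_bd (S_shift w) y ltac:(lra));
  destruct (w 0%nat) eqn:E; simpl in H; try nra.
  - auto.
  - change (w (S k)) with (S_shift w k). apply IHk. nra.
Qed.

Lemma all_zeros y : 0 < y < 1 -> forall k (w : Omega), proj y w = 0 -> w k = false.
Proof.
  intros Hy k. induction k; intros w H; rewrite proj_rec in H by lra;
  pose proof (proj_bd (S_shift w) y ltac:(lra));
  destruct (w 0%nat) eqn:E; simpl in H; try nra.
  - auto.
  - change (w (S k)) with (S_shift w k). apply IHk. nra.
Qed.

Definition Qq (al be : Omega) y := Pp al be y /\ proj y al < proj y be.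

Lemma Q_half al be (Had : admissible al be)
  (H3 : ~ (exists x, 0 < x < 1 /\ proj x al = proj x be)) : Qq al be (1/2).
Proof.
  assert (L0 : forall u : Omega, u 0%nat = false -> proj (1/2) u <= 1/2).
  { intros u H. rewrite proj_rec, H by lra. pose proof (proj_bd (S_shift u) (1/2) ltac:(lra)).
    simpl. lra. }
  assert (L1 : forall u : Omega, u 0%nat = true -> 1/2 <= proj (1/2) u).
  { intros u H. rewrite proj_rec, H by lra. pose proof (proj_bd (S_shift u) (1/2) ltac:(lra)).
    simpl. lra. }
  split.
  - intros u v _ _ Hu Hv. pose proof (L0 u Hu); pose proof (L1 v Hv); lra.
  - pose proof (L0 al (al0 al be Had)); pose proof (L1 be (be0 al be Had)).
    destruct (Rle_lt_or_eq_dec _ _ (Rle_trans _ _ _ H H0)); auto.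
    exfalso. apply H3. exists (1/2). split; [lra|auto].
Qed.

Lemma Q_step al be (Had : admissible al be) x y z : 1/2 <= y <= x -> 1/2 <= z <= x -> x < 1 ->
  Qq al be y -> Rabs (z - y) <= (proj y be - proj y al) / 4 * (1 - x) -> Qq al be z.
Proof.
  intros Hy Hz Hx [HP Hd] Hzy. set (d := proj y be - proj y al) in *.
  assert (Hd4 : 0 < d / 4) by (unfold d; lra).
  assert (Lw : forall w : Omega, - (d/4) <= proj z w - proj y w <= d/4)
    by (intro w; apply lipE with x; lra).
  split.
  - intros u v Hu Hv H0 H1.
    pose proof (R1 al be Had y u ltac:(lra) HP Hu H0).
    pose proof (R2 al be Had y v ltac:(lra) HP Hv H1).
    pose proof (Lw u); pose proof (Lw v). unfold d in *. lra.
  - pose proof (Lw al); pose proof (Lw be). unfold d in *. lra.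
Qed.

Lemma Q_closed al be (Had : admissible al be)
  (H3 : ~ (exists x, 0 < x < 1 /\ proj x al = proj x be)) x m :
  1/2 < m <= x -> x < 1 -> (forall z, 1/2 <= z < m -> Qq al be z) -> Qq al be m.
Proof.
  intros Hm Hx HQ.
  assert (Near : forall e, 0 < e -> exists z, 1/2 <= z < m /\ Rabs (m - z) <= e * (1 - x)).
  { intros e He. exists (Rmax (1/2) (m - e * (1 - x) / 2)).
    assert (0 < e * (1 - x)) by (apply Rmult_lt_0_compat; lra).
    unfold Rmax; destruct (Rle_dec (1/2) (m - e * (1 - x) / 2)); split; try lra;
    rewrite Rabs_pos_eq; lra. }
  split.
  - intros u v Hu Hv H0 H1. destruct (Rle_dec (proj m u) (proj m v)) as [|Hn]; auto.
    exfalso. set (d := proj m u - proj m v). assert (0 < d) by (unfold d; lra).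
    destruct (Near (d/4) ltac:(lra)) as [z [Hz Hmz]].
    pose proof (lipE u x m z (d/4) ltac:(lra) ltac:(lra) Hx ltac:(lra) Hmz).
    pose proof (lipE v x m z (d/4) ltac:(lra) ltac:(lra) Hx ltac:(lra) Hmz).
    destruct (HQ z Hz) as [HP _]. pose proof (HP u v Hu Hv H0 H1). unfold d in *. lra.
  - destruct (Rlt_le_dec (proj m al) (proj m be)) as [|Hn]; auto.
    destruct (Rle_lt_or_eq_dec _ _ Hn) as [Hl|He].
    2:{ exfalso. apply H3. exists m. split; [lra|auto]. }
    exfalso. set (d := proj m al - proj m be). assert (0 < d) by (unfold d; lra).
    destruct (Near (d/4) ltac:(lra)) as [z [Hz Hmz]].
    pose proof (lipE al x m z (d/4) ltac:(lra) ltac:(lra) Hx ltac:(lra) Hmz).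
    pose proof (lipE be x m z (d/4) ltac:(lra) ltac:(lra) Hx ltac:(lra) Hmz).
    destruct (HQ z Hz) as [_ HD]. unfold d in *. lra.
Qed.

Lemma Q_all al be (Had : admissible al be)
  (H3 : ~ (exists x, 0 < x < 1 /\ proj x al = proj x be)) x :
  1/2 <= x < 1 -> Qq al be x.
Proof.
  intros Hx.
  set (E := fun t => 1/2 <= t <= x /\ forall z, 1/2 <= z <= t -> Qq al be z).
  assert (Eh : E (1/2)).
  { split; [lra|]. intros z Hz. replace z with (1/2) by lra. now apply Q_half. }
  destruct (completeness E) as [m [Hub Hlub]].
  { exists x. intros t [Ht _]. lra. }
  { exists (1/2); auto. }
  assert (Hm1 : 1/2 <= m) by (apply Hub; auto).
  assert (Hm2 : m <= x) by (apply Hlub; intros t [Ht _]; lra).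
  assert (Hbelow : forall z, 1/2 <= z < m -> Qq al be z).
  { intros z Hz. destruct (Classical_Prop.classic (exists t, E t /\ z <= t)) as [[t [[_ Ht] Hzt]]|Hn].
    - apply Ht; lra.
    - exfalso. assert (m <= z); [|lra]. apply Hlub. intros t Et.
      destruct (Rle_dec t z); auto. exfalso; apply Hn; exists t; split; auto; lra. }
  assert (Qm : Qq al be m).
  { destruct (Rle_lt_or_eq_dec _ _ Hm1) as [Hlt|He].
    - apply Q_closed with x; auto; lra.
    - rewrite <- He. now apply Q_half. }
  destruct (Rle_lt_or_eq_dec _ _ Hm2) as [Hlt|He]; [|now rewrite <- He].
  exfalso.
  destruct Qm as [HPm Hdm].
  set (h := Rmin (x - m) ((proj m be - proj m al) / 4 * (1 - x))).
  assert (Hh : 0 < h).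
  { unfold h, Rmin. destruct (Rle_dec _ _); try lra.
    apply Rmult_lt_0_compat; lra. }
  assert (Hh1 : h <= x - m) by apply Rmin_l.
  assert (Hh2 : h <= (proj m be - proj m al) / 4 * (1 - x)) by apply Rmin_r.
  assert (E (m + h)).
  { split; [lra|]. intros z Hz. destruct (Rlt_le_dec z m).
    - apply Hbelow; lra.
    - apply Q_step with x m; try lra; [exact Had|split; auto|]. rewrite Rabs_pos_eq; lra. }
  pose proof (Hub _ H). lra.
Qed.

Lemma shift_formula (w : Omega) a : 1 < a -> 
  proj (1 / a) (S_shift w) = a * proj (1 / a) w - (a - 1) * b2R (w 0%nat).
Proof.
  intros Ha. assert (0 <= 1 / a < 1).
  { split. apply Rlt_le, Rdiv_lt_0_compat; lra.
    apply Rmult_lt_reg_r with a; [lra|]. unfold Rdiv. rewrite Rmult_assoc, Rinv_l; lra. }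
  rewrite (proj_rec w) by auto. field. lra.
Qed.

Theorem lemma2 (alpha beta : Omega) :
  admissible alpha beta ->
  non_null alpha beta ->
  ~ (exists x, 0 < x < 1 /\ proj x alpha = proj x beta) ->
  forall a, 1 < a <= 2 ->
  exists p, 1 - 1 / a <= p <= 1 / a /\
    (forall w, Omega_plus alpha beta w ->
       f_plus a p (proj (1 / a) w) = proj (1 / a) (S_shift w)) /\
    (forall w, Omega_minus alpha beta w ->
       f_minus a p (proj (1 / a) w) = proj (1 / a) (S_shift w)).
Proof.
  intros Had _ H3 a Ha.
  set (x := 1 / a).
  assert (Hx : 1/2 <= x < 1).
  { unfold x. split.
    - unfold Rdiv. rewrite !Rmult_1_l. apply Rinv_le_contravar; lra.
    - apply Rmult_lt_reg_r with a; [lra|]. unfold Rdiv. rewrite Rmult_assoc, Rinv_l; lra. }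
  destruct (Q_all alpha beta Had H3 x Hx) as [HP Hd].
  set (A := proj x alpha) in *. set (B := proj x beta) in *.
  assert (G1 : forall u, Omega_ab alpha beta u -> u 0%nat = false -> proj x u <= A)
    by (intros; apply (R1 alpha beta Had); auto; lra).
  assert (G2 : forall v, Omega_ab alpha beta v -> v 0%nat = true -> B <= proj x v)
    by (intros; apply (R2 alpha beta Had); auto; lra).
  assert (HA : A = x * proj x (S_shift alpha)).
  { unfold A. rewrite proj_rec, (al0 alpha beta Had) by lra. simpl. ring. }
  assert (HB : B = (1 - x) + x * proj x (S_shift beta)).
  { unfold B. rewrite proj_rec, (be0 alpha beta Had) by lra. simpl. ring. }
  pose proof (proj_bd (S_shift alpha) x ltac:(lra)) as Bsa.
  pose proof (proj_bd (S_shift beta) x ltac:(lra)) as Bsb.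
  assert (Main : forall p, 1 - x <= p <= x ->
    (forall u, Omega_plus alpha beta u -> u 0%nat = false -> proj x u < p) ->
    (forall v, Omega_plus alpha beta v -> v 0%nat = true -> p <= proj x v) ->
    (forall u, Omega_minus alpha beta u -> u 0%nat = false -> proj x u <= p) ->
    (forall v, Omega_minus alpha beta v -> v 0%nat = true -> p < proj x v) ->
    exists p, 1 - 1 / a <= p <= 1 / a /\
    (forall w, Omega_plus alpha beta w ->
       f_plus a p (proj (1 / a) w) = proj (1 / a) (S_shift w)) /\
    (forall w, Omega_minus alpha beta w ->
       f_minus a p (proj (1 / a) w) = proj (1 / a) (S_shift w))).
  { intros p Hp C1 C2 C3 C4. exists p. split; [exact Hp|split].
    - intros w Hw. rewrite shift_formula by lra. fold x. unfold f_plus.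
      destruct (w 0%nat) eqn:E; simpl.
      + pose proof (C2 w Hw E). destruct (Rlt_dec (proj x w) p); [lra|ring].
      + pose proof (C1 w Hw E). destruct (Rlt_dec (proj x w) p); [ring|lra].
    - intros w Hw. rewrite shift_formula by lra. fold x. unfold f_minus.
      destruct (w 0%nat) eqn:E; simpl.
      + pose proof (C4 w Hw E). destruct (Rle_dec (proj x w) p); [lra|ring].
      + pose proof (C3 w Hw E). destruct (Rle_dec (proj x w) p); [ring|lra]. }
  destruct (Req_dec A x) as [EA|NA].
  { apply (Main x); [lra| | | |].
    - intros u Hu H0. assert (proj x u <= x) as Hux by (pose proof (G1 u ltac:(now right) H0); lra).
      destruct (Rle_lt_or_eq_dec _ _ Hux) as [|Eu]; auto. exfalso.
      apply (al_notp alpha beta Had). enough (Eq : u = alpha) by (rewrite Eq in Hu; exact Hu).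
      assert (Pu : proj x (S_shift u) = 1).
      { rewrite proj_rec, H0 in Eu by lra. simpl in Eu.
        apply Rmult_eq_reg_l with x; lra. }
      assert (Pa : proj x (S_shift alpha) = 1) by (apply Rmult_eq_reg_l with x; lra).
      apply functional_extensionality. intros [|k].
      + rewrite H0, (al0 alpha beta Had); auto.
      + change (S_shift u k = S_shift alpha k).
        rewrite (all_ones x ltac:(lra) k _ Pu), (all_ones x ltac:(lra) k _ Pa); auto.
    - intros v Hv H1. pose proof (G2 v ltac:(now right) H1). lra.
    - intros u Hu H0. pose proof (G1 u ltac:(now left) H0). lra.
    - intros v Hv H1. pose proof (G2 v ltac:(now left) H1). lra. }
  destruct (Req_dec B (1 - x)) as [EB|NB].
  { apply (Main (1 - x)); [lra| | | |].
    - intros u Hu H0. pose proof (G1 u ltac:(now right) H0). lra.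
    - intros v Hv H1. pose proof (G2 v ltac:(now right) H1). lra.
    - intros u Hu H0. pose proof (G1 u ltac:(now left) H0). lra.
    - intros v Hv H1. assert (1 - x <= proj x v) as Hvx by (pose proof (G2 v ltac:(now left) H1); lra).
      destruct (Rle_lt_or_eq_dec _ _ Hvx) as [|Ev]; auto. exfalso.
      apply (be_notm alpha beta Had). enough (Eq : v = beta) by (rewrite Eq in Hv; exact Hv).
      assert (Pv : proj x (S_shift v) = 0).
      { rewrite proj_rec, H1 in Ev by lra. simpl in Ev.
        apply Rmult_eq_reg_l with x; lra. }
      assert (Pb : proj x (S_shift beta) = 0) by (apply Rmult_eq_reg_l with x; lra).
      apply functional_extensionality. intros [|k].
      + rewrite H1, (be0 alpha beta Had); auto.
      + change (S_shift v k = S_shift beta k).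
        rewrite (all_zeros x ltac:(lra) k _ Pv), (all_zeros x ltac:(lra) k _ Pb); auto. }
  assert (A < x) as HAx by nra. assert (1 - x < B) as HBx by nra.
  set (lo := Rmax A (1 - x)). set (hi := Rmin B x).
  assert (Hlo : A <= lo /\ 1 - x <= lo /\ (lo = A \/ lo = 1 - x))
    by (unfold lo, Rmax; destruct (Rle_dec _ _); lra).
  assert (Hhi : hi <= B /\ hi <= x /\ (hi = B \/ hi = x))
    by (unfold hi, Rmin; destruct (Rle_dec _ _); lra).
  apply (Main ((lo + hi) / 2)); [lra| | | |].
  - intros u Hu H0. pose proof (G1 u ltac:(now right) H0). lra.
  - intros v Hv H1. pose proof (G2 v ltac:(now right) H1). lra.
  - intros u Hu H0. pose proof (G1 u ltac:(now left) H0). lra.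
  - intros v Hv H1. pose proof (G2 v ltac:(now left) H1). lra.
Qed.
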